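(* Let $q$ be a prime power, $n\ge 1$, and $1\le k\le n(q-1)$. Then $C_{n,k}^q$ is self-dual (i.e. $C_{n,k}^q=(C_{n,k}^q)^\perp$) if and only if $q$ and $n$ are both odd and $k=\frac{n(q-1)}{2}$.
   Context: For a prime power $q$ and integers $n\ge 1$, $k\ge 0$, the projective Reed-Muller code $C_{n,k}^q\subseteq \mathbb{F}_q^N$, $N=\frac{q^{n+1}-1}{q-1}$, is defined as follows. For each point of $\mathbb{P}^n(\mathbb{F}_q)$ choose the affine representative $(p_0,\dots,p_n)\in\mathbb{F}_q^{n+1}\setminus\{0\}$ whose left-most nonzero coordinate equals $1$, and fix an ordering $P_1',\dots,P_N'$ of these representatives. Then $C_{n,k}^q=\{(F(P_1'),\dots,F(P_N')) : F\in \mathbb{F}_q[x_0,\dots,x_n]_k\}$, where $\mathbb{F}_q[x_0,\dots,x_n]_k$ is the space of homogeneous polynomials of degree $k$ together with $0$. Duals are taken with respect to the standard dot product on $\mathbb{F}_q^N$. *)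

(* Defs.v *)
From HB Require Import structures.
From mathcomp Require Import all_boot all_order all_algebra all_field.
From mathcomp Require Import mpoly.
Set Implicit Arguments. Unset Strict Implicit. Unset Printing Implicit Defensive.
Import GRing.Theory.
Local Open Scope ring_scope.

(* Normalized affine representatives of points of P^n(F): vectors in
   F^(n+1) whose left-most nonzero coordinate equals 1. *)
Definition normalized (F : finFieldType) (n : nat) (v : {ffun 'I_n.+1 -> F}) : bool :=
  [exists i : 'I_n.+1, (v i == 1) && [forall j : 'I_n.+1, (j < i)%N ==> (v j == 0)]].

Definition proj_points (F : finFieldType) (n : nat) : finType :=
  {v : {ffun 'I_n.+1 -> F} | normalized v}.

Definition word (F : finFieldType) (n : nat) : finType := {ffun proj_points F n -> F}.

Definition dotw (F : finFieldType) (n : nat) (c d : word F n) : F :=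
  \sum_(P : proj_points F n) c P * d P.

(* Projective Reed-Muller code C_{n,k}^q, q = #|F|, as a subset of F^N:
   evaluations of homogeneous polynomials of degree k (or 0) in
   x_0..x_n at the normalized representatives. *)
Definition inPRM (F : finFieldType) (n k : nat) (c : word F n) : Prop :=
  exists p : {mpoly F[n.+1]}, p \is k.-homog /\
    c = [ffun P : proj_points F n => p.@[fun i => (val P) i]].

Definition inPRMdual (F : finFieldType) (n k : nat) (c : word F n) : Prop :=
  forall d : word F n, inPRM k d -> dotw c d = 0.

Definition PRM_self_dual (F : finFieldType) (n k : nat) : Prop :=
  forall c : word F n, inPRM k c <-> inPRMdual k c.

(* Main.v *)
Require Import Defs.
From mathcomp Require Import all_boot all_order all_algebra all_field.
From mathcomp Require Import mpoly.
From mathcomp Require Import zify ring.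
Set Implicit Arguments. Unset Strict Implicit. Unset Printing Implicit Defensive.
Import GRing.Theory.
Local Open Scope ring_scope.

Section FF.
Variable F : finFieldType.
Local Notation q := #|F|.

Lemma q_gt1 : (1 < q)%N.
Proof. exact: finNzRing_gt1. Qed.

Lemma natr_q : (q%:R : F) = 0.
Proof.
have H : \sum_(x : F) (x + 1) = \sum_(x : F) x.
  by rewrite [RHS](reindex_inj (addIr (1:F))).
move: H; rewrite big_split /= => /eqP.
rewrite -subr_eq0 addrAC subrr add0r sumr_const => /eqP.
by rewrite cardT.
Qed.

Lemma fermat (x : F) : x != 0 -> x ^+ q.-1 = 1.
Proof.
move=> nz; apply: (mulfI nz); rewrite -exprS prednK ?expf_card ?mulr1 //.
by apply: ltn_trans q_gt1.
Qed.

Lemma sum_const_nz (x : F) : \sum_(l : F | l != 0) x = - x.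
Proof.
have H : \sum_(l : F) x = x + \sum_(l : F | l != 0) x by rewrite (bigD1 0).
have cT : \sum_(l : F) x = x *+ q by rewrite sumr_const cardE.
move: H; rewrite cT -mulr_natr natr_q mulr0 => /eqP.
rewrite eq_sym addr_eq0 => /eqP H; by rewrite [in RHS]H opprK.
Qed.

Definition Sst m := \sum_(l : F | l != 0) l ^+ m.
Definition S m := \sum_(l : F) l ^+ m.

Lemma Sst_dvd m : (q.-1 %| m)%N -> Sst m = -1.
Proof.
case/dvdnP=> t ->; rewrite /Sst -(sum_const_nz 1).
by apply: eq_bigr => l nz; rewrite mulnC exprM fermat // expr1n.
Qed.

Lemma exists_nonroot m : ~~ (q.-1 %| m)%N -> exists2 a : F, a != 0 & a ^+ m != 1.
Proof.
move=> nd.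
case: (boolP [exists a : F, (a != 0) && (a ^+ m != 1)]) => [/existsP [a /andP [nz Ha]]|/existsPn H].
  by exists a.
exfalso.
have Q0 : (0 < q.-1)%N by have := q_gt1; lia.
set r := (m %% q.-1)%N.
have r0 : (0 < r)%N by rewrite lt0n; apply: contra nd => /eqP; rewrite /r => /eqP; rewrite -/(dvdn _ _).
have rlt : (r < q.-1)%N by rewrite ltn_pmod.
have Hr : forall a : F, a != 0 -> a ^+ r = 1.
  move=> a nz; have := H a; rewrite nz /= negbK => /eqP.
  by rewrite {1}(divn_eq m q.-1) exprD mulnC exprM fermat // expr1n mul1r.
have := @max_poly_roots F ('X^r - 1) (enum (predC1 (0:F))).
rewrite size_XnsubC // -cardE cardC1.
have -> : 'X^r - 1 != 0 :> {poly F}.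
  by rewrite -size_poly_eq0 size_XnsubC.
move=> /(_ isT) /= .
have -> : all (root ('X^r - 1)) (enum (predC1 (0:F))).
  apply/allP => a; rewrite mem_enum /= => nz.
  by rewrite /root !hornerE Hr // subrr.
by rewrite enum_uniq => /(_ isT isT); rewrite ltnS leqNgt rlt.
Qed.

Lemma Sst_ndvd m : ~~ (q.-1 %| m)%N -> Sst m = 0.
Proof.
move=> nd; have [a nz Ha] := exists_nonroot nd.
have E : Sst m = a ^+ m * Sst m.
  rewrite /Sst [LHS](reindex_inj (mulfI nz)) mulr_sumr.
  apply: eq_big => [l|l _]; first by rewrite mulf_eq0 (negbTE nz).
  by rewrite exprMn.
apply/eqP; move/eqP: E; rewrite -subr_eq0 -{1}(mul1r (Sst m)) -mulrBl mulf_eq0.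
by rewrite subr_eq0 eq_sym (negbTE Ha).
Qed.

Lemma Sst_val m : Sst m = if (q.-1 %| m)%N then -1 else 0.
Proof. by case: ifP => H; [apply: Sst_dvd | apply: Sst_ndvd; rewrite H]. Qed.

Lemma S_val m : S m = if (0 < m)%N && (q.-1 %| m)%N then -1 else 0.
Proof.
rewrite /S (bigD1 0) //= -/(Sst m) Sst_val.
case: m => [|m] /=; last by rewrite expr0n add0r.
by rewrite dvdn0 expr0n /= subrr.
Qed.

End FF.

Section Vec.
Variable F : finFieldType.
Variable n : nat.
Local Notation q := #|F|.
Local Notation vec := {ffun 'I_n.+1 -> F}.
Local Notation PP := (proj_points F n).

Definition scalev (l : F) (v : vec) : vec := [ffun i => l * v i].
Definition lead_ok (v : vec) (i : 'I_n.+1) :=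
  (v i != 0) && [forall j : 'I_n.+1, (j < i)%N ==> (v j == 0)].

Lemma lead_uniq v i j : lead_ok v i -> lead_ok v j -> i = j.
Proof.
move=> /andP[vi /forallP Hi] /andP[vj /forallP Hj]; apply/val_inj => /=.
case: (ltngtP i j) => // lt.
  by have := Hj i; rewrite lt implyTb (negbTE vi).
by have := Hi j; rewrite lt implyTb (negbTE vj).
Qed.

Lemma lead_exists v : v != 0 -> exists i, lead_ok v i.
Proof.
move=> nz.
have [i0 vi0] : exists i, v i != 0.
  case: (boolP [exists i, v i != 0]) => [/existsP//|/existsPn H].
  by case/eqP: nz; apply/ffunP => i; rewrite ffunE; apply/eqP; have := H i; rewrite negbK.
case: (@arg_minnP _ i0 (fun i => v i != 0) (fun i : 'I_n.+1 => (i : nat)) vi0) => i vi Hmin.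
exists i; rewrite /lead_ok vi /=; apply/forallP => j; apply/implyP => lt.
by apply: contraTT lt => vj; rewrite -leqNgt; apply: Hmin.
Qed.

Definition lv (v : vec) : F := if [pick i | lead_ok v i] is Some i then v i else 0.

Lemma lvE v i : lead_ok v i -> lv v = v i.
Proof.
rewrite /lv; case: pickP => [j Hj|H] Hi; first by rewrite (lead_uniq Hj Hi).
by move: (H i); rewrite Hi.
Qed.

Lemma lv0 : lv 0 = 0.
Proof. by rewrite /lv; case: pickP => // j; rewrite /lead_ok ffunE eqxx. Qed.

Lemma lv_neq0 v : v != 0 -> lv v != 0.
Proof. by move=> /lead_exists [i Hi]; rewrite (lvE Hi); case/andP: Hi. Qed.

Lemma normalized_lead v : normalized v -> exists2 i, lead_ok v i & v i = 1.
Proof.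
case/existsP => i /andP[/eqP vi1 H]; exists i => //.
by rewrite /lead_ok vi1 oner_eq0 H.
Qed.

Lemma lv_norm (P : PP) : lv (val P) = 1.
Proof. by have [i Hi <-] := normalized_lead (valP P); apply: lvE. Qed.

Lemma val_neq0 (P : PP) : val P != 0.
Proof.
apply/eqP => H; have := lv_norm P; rewrite H lv0 => /eqP.
by rewrite eq_sym oner_eq0.
Qed.

Lemma lead_ok_scale l v i : l != 0 -> lead_ok (scalev l v) i = lead_ok v i.
Proof.
move=> nz; rewrite /lead_ok !ffunE mulf_eq0 (negbTE nz) /=; congr andb.
by apply: eq_forallb => j; rewrite ffunE mulf_eq0 (negbTE nz).
Qed.

Lemma scalev0 l : scalev l 0 = 0.
Proof. by apply/ffunP => i; rewrite !ffunE mulr0. Qed.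

Lemma scale0v v : scalev 0 v = 0.
Proof. by apply/ffunP => i; rewrite !ffunE mul0r. Qed.

Lemma scale1v v : scalev 1 v = v.
Proof. by apply/ffunP => i; rewrite !ffunE mul1r. Qed.

Lemma scalevA l m v : scalev l (scalev m v) = scalev (l * m) v.
Proof. by apply/ffunP => i; rewrite !ffunE mulrA. Qed.

Lemma lv_scale l v : l != 0 -> lv (scalev l v) = l * lv v.
Proof.
move=> nz; case: (eqVneq v 0) => [->|nzv]; first by rewrite scalev0 lv0 mulr0.
have [i Hi] := lead_exists nzv.
by rewrite (lvE Hi) (@lvE _ i) ?ffunE // lead_ok_scale.
Qed.

Definition normv (v : vec) : vec := scalev (lv v)^-1 v.

Lemma normv_ok v : v != 0 -> normalized (normv v).
Proof.
move=> nz; have [i Hi] := lead_exists nz.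
have nzl : (lv v)^-1 != 0 by rewrite invr_eq0 lv_neq0.
have := Hi; rewrite -(lead_ok_scale _ _ nzl) => /andP[_ H].
apply/existsP; exists i; rewrite H andbT /normv ffunE (lvE Hi) mulVf //.
by case/andP: Hi.
Qed.

Definition P0 : PP.
Proof.
exists [ffun i => ((i : 'I_n.+1) == ord0)%:R]; apply/existsP; exists ord0.
rewrite ffunE eqxx eqxx /=; exact/forallP.
Defined.

Definition pr (v : vec) : PP := insubd P0 (normv v).

Lemma val_pr v : v != 0 -> val (pr v) = normv v.
Proof. by move=> nz; rewrite insubdK //; apply: normv_ok. Qed.

Lemma sum_proj (g : vec -> F) :
  \sum_(v : vec | v != 0) g v =
  \sum_(P : PP) \sum_(l : F | l != 0) g (scalev l (val P)).
Proof.
rewrite (reindex_onto (fun p : PP * F => scalev p.2 (val p.1)) (fun v => (pr v, lv v))) /=.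
  rewrite pair_big_dep /=; apply: eq_bigl => [[P l]] /=.
  case: (eqVneq l 0) => [->|nz]; first by rewrite scale0v eqxx.
  have nzs : scalev l (val P) != 0.
    by apply: contraNneq (mulf_neq0 nz (lv_neq0 (val_neq0 P))) => /(congr1 lv); rewrite lv_scale // lv0 => ->.
  rewrite nzs /=; apply/eqP; congr pair; last by rewrite lv_scale // lv_norm mulr1.
  apply: val_inj; rewrite val_pr // /normv lv_scale // lv_norm mulr1 scalevA mulVf //.
  by rewrite scale1v.
move=> v nz; rewrite val_pr // /normv scalevA divff ?lv_neq0 //.
by rewrite scale1v.
Qed.

End Vec.

Section Mono.
Variable F : finFieldType.
Variable n : nat.
Local Notation q := #|F|.
Local Notation vec := {ffun 'I_n.+1 -> F}.
Local Notation PP := (proj_points F n).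

Definition mono (e : 'I_n.+1 -> nat) (v : vec) : F := \prod_i v i ^+ e i.
Definition deg (e : 'I_n.+1 -> nat) := (\sum_i e i)%N.

Lemma sum_const_nzF (x : F) : \sum_(l : F | l != 0) x = - x.
Proof. exact: sum_const_nz. Qed.

Lemma sum_proj_hom (h : vec -> F) :
  (forall l v, l != 0 -> h (scalev l v) = h v) ->
  \sum_(P : PP) h (val P) = h 0 - \sum_(v : vec) h v.
Proof.
move=> Hh; rewrite (bigD1 (0 : vec)) //= sum_proj.
have E : \sum_(P : PP) \sum_(l : F | l != 0) h (scalev l (val P)) = - \sum_(P : PP) h (val P).
  rewrite -sumrN; apply: eq_bigr => P _; under eq_bigr => l nz do rewrite Hh //.
  exact: sum_const_nz.
by rewrite E opprD opprK addNKr.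
Qed.

Lemma mono_scale l v e : mono e (scalev l v) = l ^+ deg e * mono e v.
Proof.
rewrite /mono (eq_bigr (fun i => l ^+ e i * v i ^+ e i)) => [|i _]; last by rewrite ffunE exprMn.
by rewrite big_split /= prodrXr.
Qed.

Lemma sum_mono e : \sum_(v : vec) mono e v = \prod_i S F (e i).
Proof. by rewrite /mono /S bigA_distr_bigA. Qed.

Lemma deg_pos e : (0 < deg e)%N -> exists i, (0 < e i)%N.
Proof.
move=> dp; case: (boolP [exists i, 0 < e i]%N) => [/existsP//|/existsPn H].
have H0 : forall i, e i = 0%N by move=> i; have := H i; rewrite lt0n negbK => /eqP.
by move: dp; rewrite /deg big1.
Qed.

Lemma mono0 e : (0 < deg e)%N -> mono e 0 = 0.
Proof.
move=> /deg_pos [i ei]; rewrite /mono (bigD1 i) //= ffunE expr0n.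
by rewrite eqn0Ngt ei mul0r.
Qed.

Lemma sum_proj_mono e : (q.-1 %| deg e)%N -> (0 < deg e)%N ->
  \sum_(P : PP) mono e (val P) = - \prod_i S F (e i).
Proof.
move=> dv dp; rewrite sum_proj_hom ?mono0 ?sum_mono ?sub0r //.
move=> l v nz; rewrite mono_scale; case/dvdnP: dv => t ->.
by rewrite mulnC exprM fermat // expr1n mul1r.
Qed.

Lemma prodS0 e : (deg e < n.+1 * q.-1)%N -> \prod_i S F (e i) = 0.
Proof.
move=> dl.
case: (boolP [exists i, e i < q.-1]%N) => [/existsP [i lti]|/existsPn H].
  rewrite (bigD1 i) //= S_val; case: ifP => [/andP[p d]|_]; last by rewrite mul0r.
  by have := dvdn_leq p d; rewrite leqNgt lti.
move: dl; rewrite ltnNge => /negP; case.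
have -> : (n.+1 * q.-1 = \sum_(i < n.+1) q.-1)%N by rewrite sum_nat_const card_ord.
by apply: leq_sum => i _; have := H i; rewrite -leqNgt.
Qed.

Lemma prodS_all : \prod_(i < n.+1) S F q.-1 = (-1) ^+ n.+1.
Proof.
rewrite S_val dvdnn andbT prodr_const card_ord.
by have := q_gt1 F; case: q => [|[|]].
Qed.

Definition monoW e : {ffun PP -> F} := [ffun P : PP => mono e (val P)].

Lemma dotwC (c d : {ffun PP -> F}) : dotw c d = dotw d c.
Proof. by apply: eq_bigr => P _; rewrite mulrC. Qed.

Lemma mono_add a b v : mono a v * mono b v = mono (fun i => a i + b i)%N v.
Proof. by rewrite /mono -big_split /=; apply: eq_bigr => i _; rewrite exprD. Qed.

Lemma deg_add a b : deg (fun i => a i + b i)%N = (deg a + deg b)%N.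
Proof. by rewrite /deg big_split. Qed.

Lemma dotw_mono a b : dotw (monoW a) (monoW b) = \sum_(P : PP) mono (fun i => a i + b i)%N (val P).
Proof. by apply: eq_bigr => P _; rewrite !ffunE mono_add. Qed.

End Mono.
Arguments monoW {F n} e.

Lemma expr_lift (F : finFieldType) (x : F) a t : (0 < a)%N -> (#|F|.-1 %| t)%N ->
  x ^+ (a + t) = x ^+ a.
Proof.
move=> a0 /dvdnP [s ->]; case: (eqVneq x 0) => [->|nz].
  by rewrite !expr0n addn_eq0 !eqn0Ngt a0.
by rewrite exprD mulnC exprM fermat // expr1n mulr1.
Qed.

Section Code.
Variable F : finFieldType.
Variables n k : nat.
Local Notation q := #|F|.
Local Notation vec := {ffun 'I_n.+1 -> F}.
Local Notation PP := (proj_points F n).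
Local Notation mW := (@monoW F n).

Lemma inPRM_mono (e : 'I_n.+1 -> nat) : deg e = k -> inPRM k (mW e).
Proof.
move=> de; exists 'X_[[multinom e i | i < n.+1]]; split.
  rewrite dhomogX /= mdegE; apply/eqP; rewrite -de; apply: eq_bigr => i _.
  by rewrite mnmE.
apply/ffunP => P; rewrite !ffunE mevalX; apply: eq_bigr => i _.
by rewrite mnmE.
Qed.

Lemma inPRM0 : inPRM k (0 : {ffun PP -> F}).
Proof.
exists 0; split; first exact: dhomog0.
by apply/ffunP => P; rewrite !ffunE meval0.
Qed.

Lemma inPRM_add (c d : {ffun PP -> F}) : inPRM k c -> inPRM k d -> inPRM k (c + d).
Proof.
move=> [p [hp ->]] [p' [hp' ->]]; exists (p + p'); split; first exact: dhomogD.
by apply/ffunP => P; rewrite !ffunE mevalD.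
Qed.

Lemma inPRM_scale a (c : {ffun PP -> F}) : inPRM k c -> inPRM k [ffun P => a * c P].
Proof.
move=> [p [hp ->]]; exists (a *: p); split; first exact: dhomogZ.
by apply/ffunP => P; rewrite !ffunE mevalZ.
Qed.

Lemma inPRM_sum (I : finType) (f : I -> {ffun PP -> F}) :
  (forall i, inPRM k (f i)) -> inPRM k (\sum_i f i).
Proof.
move=> H; apply: (big_ind (inPRM k)) => //; [exact: inPRM0|exact: inPRM_add].
Qed.

Lemma inPRM_dual_mono (w : {ffun PP -> F}) :
  (forall e : 'I_n.+1 -> nat, deg e = k -> dotw w (mW e) = 0) -> inPRMdual k w.
Proof.
move=> H d [p [hp ->]]; rewrite /dotw.
under eq_bigr => P _ do rewrite ffunE mevalE mulr_sumr.
rewrite exchange_big /=; apply: big1_seq => m /andP[_ ms].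
have dm := dhomog_mf hp ms.
rewrite (eq_bigr (fun P : PP => p@_m * (w P * mW (fun i => m i) P))) => [|P _]; last first.
  by rewrite ffunE /mono mulrCA.
rewrite -mulr_sumr; have -> : \sum_(P : PP) w P * mW (fun i => m i) P = 0.
  by apply: H; rewrite /deg -(mdegE m).
by rewrite mulr0.
Qed.

Lemma inPRM_lift (e : 'I_n.+1 -> nat) : (0 < deg e)%N -> (deg e <= k)%N -> (q.-1 %| k - deg e)%N ->
  inPRM k (mW e).
Proof.
move=> dp dk dv; have [i0 ei0] := deg_pos dp.
pose e' := fun i => (e i + (i == i0) * (k - deg e))%N.
have -> : mW e = mW e'.
  apply/ffunP => P; rewrite !ffunE /mono; apply: eq_bigr => i _ /=.
  rewrite /e'; case: (eqVneq i i0) => [->|ne]; last by rewrite mul0n addn0.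
  by rewrite mul1n expr_lift.
apply: inPRM_mono; rewrite /deg /e' big_split /= -/(deg e).
rewrite (bigD1 i0) //= eqxx mul1n big1 ?addn0 => [|i /negbTE ->]; last by rewrite mul0n.
by rewrite subnKC.
Qed.

End Code.

Lemma sum_min (Q K N : nat) : (\sum_(i < N) minn Q (K - i * Q))%N = minn K (N * Q).
Proof.
elim: N => [|N IH]; first by rewrite big_ord0 mul0n; lia.
by rewrite big_ord_recr /= IH mulSn; lia.
Qed.

Section Nonorth.
Variable F : finFieldType.
Variable n : nat.
Local Notation q := #|F|.
Local Notation vec := {ffun 'I_n.+1 -> F}.
Local Notation PP := (proj_points F n).
Local Notation mW := (@monoW F n).

Lemma P0_01 (P : PP) : val P ord0 = 0 \/ val P ord0 = 1.
Proof.
have [i /andP[_ /forallP Hi] Pi] := normalized_lead (valP P).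
case: (eqVneq i ord0) => [<-|ne]; first by right.
left; apply/eqP; move: (Hi ord0) => /implyP; apply.
by rewrite /= lt0n; apply: contra ne => /eqP H; apply/eqP/val_inj.
Qed.

Lemma sum_const_mono :
  \sum_(P : PP) mono (fun _ : 'I_n.+1 => q.-1) (val P) = - (-1) ^+ n.+1.
Proof.
have Q0 : (0 < q.-1)%N by have := q_gt1 F; lia.
have dq : deg (fun _ : 'I_n.+1 => q.-1) = (n.+1 * q.-1)%N by rewrite /deg sum_nat_const card_ord.
rewrite sum_proj_mono ?dq ?dvdn_mull //; last by rewrite muln_gt0.
by rewrite prodS_all.
Qed.

Lemma key_nonorth K : (n * q.-1 < K.*2)%N -> (K <= n * q.-1)%N ->
  exists a b : 'I_n.+1 -> nat, [/\ deg a = K, deg b = K & dotw (mW a) (mW b) != 0].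
Proof.
move=> h1 h2.
set Q := q.-1 in h1 h2 *.
have Q0 : (0 < Q)%N by have := q_gt1 F; rewrite /Q; lia.
pose a := fun i : 'I_n.+1 => if (i : nat) == 0%N then 0%N else minn Q (K - (i.-1) * Q).
pose e := fun i : 'I_n.+1 => if (i : nat) == 0%N then (K.*2 - n * Q)%N else Q.
pose b := fun i => (e i - a i)%N.
have ae : forall i, (a i <= e i)%N.
  by move=> i; rewrite /a /e; case: eqP => // _; apply: geq_minl.
have da : deg a = K.
  rewrite /deg big_ord_recl /= add0n.
  rewrite (eq_bigr (fun j : 'I_n => minn Q (K - j * Q))) => [|j _]; last by rewrite /a lift0.
  by rewrite sum_min; lia.
have de : deg e = K.*2.
  rewrite /deg big_ord_recl /=.
  rewrite (eq_bigr (fun j : 'I_n => Q)) => [|j _]; last by rewrite /e lift0.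
  by rewrite sum_nat_const card_ord /e /=; lia.
have db : deg b = K.
  have : (deg b + deg a = deg e)%N.
    by rewrite /deg -big_split /=; apply: eq_bigr => i _; rewrite subnK.
  by rewrite da de; lia.
exists a, b; split => //.
rewrite dotw_mono.
have -> : \sum_(P : PP) mono (fun i => a i + b i)%N (val P) =
          \sum_(P : PP) mono (fun _ : 'I_n.+1 => Q) (val P).
  apply: eq_bigr => P _; apply: eq_bigr => i _.
  rewrite /b subnKC // /e; case: (eqVneq i ord0) => [->|ne] /=; last first.
    by case: eqP => // H; case/eqP: ne; apply/val_inj.
  by case: (P0_01 P) => ->; rewrite ?expr1n // !expr0n; case: eqP; case: eqP => //; lia.
by rewrite sum_const_mono oppr_eq0 expf_neq0 // oppr_eq0 oner_eq0.
Qed.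

End Nonorth.

Section Expand.
Variable F : finFieldType.
Variables n k : nat.
Local Notation q := #|F|.
Local Notation vec := {ffun 'I_n.+1 -> F}.
Local Notation PP := (proj_points F n).
Local Notation mW := (@monoW F n).
Local Notation J := ('I_q * 'I_q)%type.

Definition gam (mj : J) : F :=
  ((((mj.1 : nat) == 0%N) && ((mj.2 : nat) == 0%N))%:R - (((mj.1 + mj.2)%N == q.-1))%:R).

Lemma q_gt0 : (0 < q)%N.
Proof. by have := q_gt1 F; lia. Qed.

Lemma eq_expand (x s : F) :
  (x == s)%:R = \sum_(mj : J) gam mj * x ^+ mj.1 * s ^+ mj.2.
Proof.
pose o0 : 'I_q := Ordinal q_gt0.
rewrite /gam; under eq_bigr do rewrite !mulrBl.
rewrite sumrB.
have -> : \sum_(mj : J) ((((mj.1 : nat) == 0%N) && ((mj.2 : nat) == 0%N))%:R * x ^+ mj.1 * s ^+ mj.2) = 1.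
  rewrite (bigD1 (o0, o0)) //= !expr0 !mulr1 big1 ?addr0 // => [[m j]] /= ne.
  case: (eqVneq (m : nat) 0%N) => [m0|]; case: (eqVneq (j : nat) 0%N) => [j0|] //= *; rewrite ?mul0r //.
  by case/eqP: ne; congr pair; apply/val_inj.
rewrite -(pair_bigA _ (fun (m j : 'I_q) => ((m + j)%N == q.-1)%:R * x ^+ m * s ^+ j)) /=.
have -> : \sum_(m : 'I_q) \sum_(j : 'I_q) (((m + j)%N == q.-1)%:R * x ^+ m * s ^+ j) =
          \sum_(m : 'I_q) x ^+ m * s ^+ (q.-1 - m).
  apply: eq_bigr => m _.
  have lt : (q.-1 - m < q)%N by have := q_gt0; lia.
  rewrite (bigD1 (Ordinal lt)) //= big1 ?addr0 => [|j ne].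
    by rewrite subnKC ?eqxx ?mul1r // -ltnS prednK ?q_gt0 ?ltn_ord.
  case: (eqVneq (m + j)%N q.-1) => [H|]; rewrite ?mul0r //.
  by case/eqP: ne; apply/val_inj => /=; rewrite -H addKn.
case: (eqVneq x s) => [->|ne].
  rewrite (eq_bigr (fun _ => s ^+ q.-1)) => [|m _]; last first.
    by rewrite -exprD subnKC // -ltnS prednK ?q_gt0 ?ltn_ord.
  by rewrite sumr_const card_ord -[_ *+ #|F|]mulr_natr natr_q mulr0 subr0.
have := subrXX s x q; rewrite !expf_card.
rewrite (eq_bigr (fun m : 'I_q => x ^+ m * s ^+ (q.-1 - m))) => [|m _]; last by rewrite mulrC.
move=> /esym; rewrite -{2}(mulr1 (s - x)) => /mulfI H.
by rewrite H ?subrr // subr_eq0 eq_sym.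
Qed.

Lemma vec_eq_prod (v w : vec) : (v == w)%:R = \prod_i (v i == w i)%:R :> F.
Proof.
case: (eqVneq v w) => [->|ne]; first by rewrite big1 // => i _; rewrite eqxx.
have [i ni] : exists i, v i != w i.
  case: (boolP [exists i, v i != w i]) => [/existsP//|/existsPn H].
  by case/eqP: ne; apply/ffunP => i; apply/eqP; have := H i; rewrite negbK.
by rewrite (bigD1 i) //= (negbTE ni) mul0r.
Qed.

Lemma proj_eq (P R : PP) :
  \sum_(l : F | l != 0) l ^+ k * (val P == scalev l (val R))%:R = (P == R)%:R.
Proof.
have E : forall l, l != 0 -> (val P == scalev l (val R)) = (l == 1) && (P == R).
  move=> l nz; apply/eqP/andP => [H|[/eqP -> /eqP ->]]; last by rewrite scale1v.
  have l1 : l = 1 by have := lv_norm P; rewrite H lv_scale // lv_norm mulr1.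
  by split; [rewrite l1 | apply/eqP/val_inj; rewrite H l1 scale1v].
under eq_bigr => l nz do rewrite E //.
rewrite (bigD1 1) ?oner_neq0 //= eqxx expr1n mul1r big1 ?addr0 // => l /andP[_ /negbTE ->].
by rewrite mulr0.
Qed.

Lemma prod_split (f : {ffun 'I_n.+1 -> J}) (l : F) (v w : vec) :
  \prod_i (gam (f i) * v i ^+ (f i).1 * (l * w i) ^+ (f i).2) =
  (\prod_i gam (f i)) * mono (fun i => (f i).1 : nat) v *
  (l ^+ deg (fun i => (f i).2 : nat) * mono (fun i => (f i).2 : nat) w).
Proof.
under eq_bigr do rewrite exprMn.
by rewrite !big_split /= prodrXr.
Qed.

Lemma eqR_expand (P R : PP) :
  (P == R)%:R = \sum_(f : {ffun 'I_n.+1 -> J})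
    (\prod_i gam (f i)) * mono (fun i => (f i).1 : nat) (val P) *
    Sst F (k + deg (fun i => (f i).2 : nat)) * mono (fun i => (f i).2 : nat) (val R).
Proof.
rewrite -proj_eq.
have E : forall l : F, (val P == scalev l (val R))%:R =
    \sum_(f : {ffun 'I_n.+1 -> J}) (\prod_i gam (f i)) * mono (fun i => (f i).1 : nat) (val P) *
    (l ^+ deg (fun i => (f i).2 : nat) * mono (fun i => (f i).2 : nat) (val R)).
  move=> l; rewrite vec_eq_prod.
  rewrite (eq_bigr (fun i => \sum_(mj : J) gam mj * val P i ^+ mj.1 * (l * val R i) ^+ mj.2)); last first.
    by move=> i _; rewrite /scalev ffunE eq_expand.
  by rewrite bigA_distr_bigA; apply: eq_bigr => f _; rewrite prod_split.
under eq_bigr => l nz do rewrite E mulr_sumr.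
rewrite exchange_big /=; apply: eq_bigr => f _.
rewrite /Sst mulr_sumr mulr_suml; apply: eq_bigr => l _.
by rewrite exprD; ring.
Qed.

Lemma c_expand (c : {ffun PP -> F}) (P : PP) :
  c P = \sum_(f : {ffun 'I_n.+1 -> J})
    (\prod_i gam (f i)) * mono (fun i => (f i).1 : nat) (val P) *
    Sst F (k + deg (fun i => (f i).2 : nat)) * dotw c (mW (fun i => (f i).2 : nat)).
Proof.
have E1 : c P = \sum_(R : PP) c R * (P == R)%:R.
  rewrite (bigD1 P) //= eqxx mulr1 big1 ?addr0 // => R ne.
  by rewrite eq_sym (negbTE ne) mulr0.
rewrite E1; under eq_bigr => R _ do rewrite eqR_expand mulr_sumr.
rewrite exchange_big /=; apply: eq_bigr => f _.
rewrite /dotw [RHS]mulr_sumr; apply: eq_bigr => R _.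
by rewrite ffunE; ring.
Qed.

End Expand.

Section Dual.
Variable F : finFieldType.
Variables n k : nat.
Local Notation q := #|F|.
Local Notation vec := {ffun 'I_n.+1 -> F}.
Local Notation PP := (proj_points F n).
Local Notation mW := (@monoW F n).
Local Notation J := ('I_q * 'I_q)%type.

Lemma gam_nz (mj : J) : gam mj != 0 ->
  ((mj.1 + mj.2)%N == 0%N) || ((mj.1 + mj.2)%N == q.-1).
Proof.
move=> H; case: (boolP (_ || _)) => // /norP [h0 hQ]; move: H; rewrite /gam (negbTE hQ) subr0.
have -> : (((mj.1 : nat) == 0%N) && ((mj.2 : nat) == 0%N)) = false.
  by apply/negbTE; apply: contra h0 => /andP[/eqP -> /eqP ->].
by rewrite eqxx.
Qed.

Lemma dual_sub (c : {ffun PP -> F}) :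
  (k * 2 = n * q.-1)%N -> ~~ (q.-1 %| k)%N -> inPRMdual k c -> inPRM k c.
Proof.
move=> h2 hk hc.
pose a (f : {ffun 'I_n.+1 -> J}) := (\prod_i gam (f i)) *
   Sst F (k + deg (fun i => (f i).2 : nat)) * dotw c (mW (fun i => (f i).2 : nat)).
have -> : c = \sum_(f : {ffun 'I_n.+1 -> J}) [ffun P => a f * mW (fun i => (f i).1 : nat) P].
  apply/ffunP => P; rewrite (@c_expand _ _ k) sum_ffunE; apply: eq_bigr => f _.
  by rewrite !ffunE /a; ring.
apply: inPRM_sum => f.
case: (eqVneq (a f) 0) => [->|anz].
  have -> : [ffun P => 0 * mW (fun i => (f i).1 : nat) P] = 0.
    by apply/ffunP => P; rewrite !ffunE mul0r.
  exact: inPRM0.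
apply: inPRM_scale.
move: anz; rewrite /a !mulf_eq0 !negb_or => /andP[/andP[hg hS] hd].
set m := (fun i => (f i).1 : nat) in hd *; set j := (fun i => (f i).2 : nat) in hS hd *.
have Q0 : (0 < q.-1)%N by have := q_gt1 F; lia.
have {}hS : (q.-1 %| k + deg j)%N.
  by move: hS; rewrite Sst_val; case: ifP => //; rewrite eqxx.
have {}hg : forall i, ((m i + j i)%N == 0%N) || ((m i + j i)%N == q.-1).
  by move=> i; apply: gam_nz; move/prodf_neq0: hg; apply.
have hd2 : ~ inPRM k (mW j) by move=> H; move: hd; rewrite hc // eqxx.
have dQ2 : (q.-1 %| k * 2)%N by rewrite h2 dvdn_mull.
have Ek : (k < deg j)%N.
  rewrite ltnNge; apply/negP => Ek; apply: hd2; apply: inPRM_lift => //.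
    rewrite lt0n; apply: contra hk => /eqP E0; move: hS; rewrite E0 addn0.
    by [].
  have -> : (k - deg j = k * 2 - (k + deg j))%N by lia.
  by apply: dvdn_sub.
have HDE : (deg m + deg j = \sum_i (m i + j i))%N by rewrite /deg big_split.
have Hle : (deg m + deg j <= n.+1 * q.-1)%N.
  have -> : (n.+1 * q.-1 = \sum_(i < n.+1) q.-1)%N by rewrite sum_nat_const card_ord.
  rewrite HDE; apply: leq_sum => i _.
  by case/orP: (hg i) => /eqP ->.
have Hdv : (q.-1 %| deg m + deg j)%N.
  by rewrite HDE; apply: dvdn_sum => i _; case/orP: (hg i) => /eqP ->; rewrite ?dvdn0 ?dvdnn.
case/dvdnP: Hdv => u Hu; case/dvdnP: hS => w Hw.
have uw : (u <= w)%N.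
  rewrite leqNgt; apply/negP => lt.
  have : (w.+1 * q.-1 <= u * q.-1)%N by rewrite leq_mul2r lt orbT.
  rewrite mulSn => H.
  move: Hle; rewrite mulSn -h2.
  move: H Hu Hw Ek; move: (u * q.-1)%N (w * q.-1)%N => X Y; lia.
have Dk : (deg m <= k)%N.
  have : (u * q.-1 <= w * q.-1)%N by rewrite leq_mul2r uw orbT.
  move: Hu Hw; move: (u * q.-1)%N (w * q.-1)%N => X Y; lia.
have Ddv : (q.-1 %| k - deg m)%N.
  have -> : (k - deg m = (w - u) * q.-1)%N.
    by rewrite mulnBl; move: Hu Hw; move: (u * q.-1)%N (w * q.-1)%N => X Y; lia.
  by rewrite dvdn_mull.
apply: inPRM_lift => //.
rewrite lt0n; apply: contra hk => /eqP D0; move: Ddv; rewrite D0 subn0.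
by [].
Qed.

End Dual.

Section Main.
Variable F : finFieldType.
Variables n k : nat.
Local Notation q := #|F|.
Local Notation vec := {ffun 'I_n.+1 -> F}.
Local Notation PP := (proj_points F n).
Local Notation mW := (@monoW F n).

Lemma Q_gt0 : (0 < q.-1)%N.
Proof. by have := q_gt1 F; lia. Qed.

Lemma orth_mono (e e' : 'I_n.+1 -> nat) :
  (deg e + deg e' = n * q.-1)%N -> (0 < n)%N -> dotw (mW e) (mW e') = 0.
Proof.
move=> hd n0; rewrite dotw_mono sum_proj_mono ?deg_add ?hd ?dvdn_mull ?muln_gt0 ?n0 ?Q_gt0 //.
by rewrite prodS0 ?oppr0 // deg_add hd ltn_mul2r Q_gt0 /=.
Qed.

Lemma C_orth : (k * 2 = n * q.-1)%N -> (0 < n)%N ->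
  forall c : {ffun PP -> F}, inPRM k c -> inPRMdual k c.
Proof.
move=> h2 n0 c Hc; apply: inPRM_dual_mono => e de; rewrite dotwC.
apply: (inPRM_dual_mono (k := k)) => // e' de'.
by apply: orth_mono => //; rewrite de de'; lia.
Qed.

Lemma sum_one : \sum_(P : PP) (1 : F) = 1.
Proof.
rewrite (sum_proj_hom (h := fun _ : vec => (1 : F))) //.
rewrite sumr_const card_ffun card_ord -mulr_natr mul1r natrX natr_q expr0n /=.
by rewrite subr0.
Qed.

End Main.

Theorem mainTheorem4 (F : finFieldType) (n k : nat) :
  (1 <= n)%N -> (1 <= k)%N -> (k <= n * (#|F| - 1))%N ->
  PRM_self_dual F n k <->
  [/\ odd #|F|, odd n & k = (n * (#|F| - 1)) %/ 2]%N.
Proof.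
rewrite subn1 => n1 k1 kle.
have Q0 := @Q_gt0 F.
split.
- move=> SD.
  have h2 : (k * 2 = n * #|F|.-1)%N.
    case: (ltngtP (n * #|F|.-1) (k * 2)) => // [lt|gt].
      have lt2 : (n * #|F|.-1 < k.*2)%N by rewrite -muln2.
      have [a [b [da db hab]]] := @key_nonorth F n k lt2 kle.
      case/negP: hab; apply/eqP.
      by apply: (proj1 (SD _)); [apply: inPRM_mono | apply: inPRM_mono].
    have g1 : (n * #|F|.-1 < (n * #|F|.-1 - k).*2)%N by rewrite -muln2; lia.
    have g2 : (n * #|F|.-1 - k <= n * #|F|.-1)%N by lia.
    have [a [b [da db hab]]] := @key_nonorth F n (n * #|F|.-1 - k)%N g1 g2.
    have Ha : forall x : 'I_n.+1 -> nat, deg x = (n * #|F|.-1 - k)%N ->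
        inPRMdual k (@monoW F n x).
      move=> x dx; apply: inPRM_dual_mono => e de.
      by apply: orth_mono => //; rewrite dx de; lia.
    case/negP: hab; apply/eqP; rewrite dotwC.
    by apply: (Ha b db); apply: (proj2 (SD _)); apply: Ha.
  have nodd : odd n.
    case: (boolP (odd n)) => // ne; exfalso.
    have hn : n = (n./2 * 2)%N by rewrite muln2 -{1}(odd_double_half n) (negbTE ne).
    have kQ : k = (n./2 * #|F|.-1)%N.
      by apply/eqP; rewrite -(eqn_pmul2r (isT : (0 < 2)%N)) h2 {1}hn mulnAC.
    pose one : {ffun proj_points F n -> F} := [ffun _ => 1].
    have Hd : inPRMdual k one.
      apply: inPRM_dual_mono => e de.
      rewrite /dotw (eq_bigr (fun P => mono e (val P))) => [|P _]; last by rewrite !ffunE mul1r.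
      rewrite sum_proj_mono ?de ?kQ ?dvdn_mull // -?kQ ?k1 //.
      rewrite prodS0 ?oppr0 // de; apply: leq_ltn_trans kle _.
      by rewrite ltn_pmul2r.
    have := Hd one ((proj2 (SD one)) Hd).
    rewrite /dotw (eq_bigr (fun _ => 1)) => [|P _]; last by rewrite ffunE mul1r.
    by rewrite sum_one => /eqP; rewrite oner_eq0.
  have qodd : odd #|F|.
    move: (congr1 odd h2); rewrite oddM /= andbF oddM nodd /= => /esym ev.
    by rewrite -(prednK (ltnW (q_gt1 F))) /= ev.
  by split => //; rewrite -h2 mulnK.
- case=> qodd nodd ->.
  have Qe : ~~ odd #|F|.-1 by move: qodd; rewrite -{1}(prednK (ltnW (q_gt1 F))).
  have [h hQ] : exists h, #|F|.-1 = (h * 2)%N.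
    by exists (#|F|.-1)./2; rewrite muln2 -{1}(odd_double_half #|F|.-1) (negbTE Qe).
  have h0 : (0 < h)%N by move: Q0; rewrite hQ; lia.
  have h2 : ((n * #|F|.-1) %/ 2 * 2 = n * #|F|.-1)%N by rewrite hQ mulnA mulnK.
  have hk : ~~ (#|F|.-1 %| (n * #|F|.-1) %/ 2)%N.
    rewrite hQ mulnA mulnK // [(h * 2)%N]mulnC dvdn_pmul2r //.
    by rewrite dvdn2 nodd.
  split => [Hc|Hd]; first exact: C_orth.
  exact: dual_sub.
Qed.
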